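(* Let $K$ be an infinite field, $m\geq 1$, $n\geq 2$, and let $p(x_1,\ldots,x_m)\in K\langle x_1,\ldots,x_m\rangle$ be a noncommutative polynomial with zero constant term and $\mathrm{ord}(p)=r$, where $1<r<n-1$. Let $A'=(a'_{ij})\in T_n(K)^{(r-1)}$ be such that $a'_{s,r+s}\neq 0$ for all $s$ with $1\leq s$ and $r+s\leq n$. Then $A'\in p(T_n(K))$.
   Context: $T_n(K)$ denotes the algebra of $n\times n$ upper triangular matrices over $K$; $T_n(K)^{(t)}$ denotes the set of upper triangular matrices whose $(i,j)$ entries vanish whenever $j-i\leq t$. $p(T_n(K))=\{p(a_1,\ldots,a_m):a_i\in T_n(K)\}$. The order $\mathrm{ord}(p)$ is the least positive integer $r$ with $p(T_r(K))=\{0\}$ but $p(T_{r+1}(K))\neq\{0\}$ (with $T_1(K)=K$). *)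

(* Defs.v *)
From HB Require Import structures.
From mathcomp Require Import all_boot all_order all_algebra.
Set Implicit Arguments. Unset Strict Implicit. Unset Printing Implicit Defensive.
Import Order.TTheory GRing.Theory Num.Theory.
Local Open Scope ring_scope.

(* A noncommutative polynomial in K<x_0,...,x_{m-1}>, represented as a finite
   formal sum of monomials: each entry (c, w) is the term c * x_{w_1}...x_{w_k}.
   The empty word is the constant monomial 1. *)
Definition ncpoly (K : Type) (m : nat) := seq (K * seq 'I_m).

Definition nc_const (K : nzRingType) (m : nat) (p : ncpoly K m) : K :=
  \sum_(t <- p | nilp t.2) t.1.

Definition nc_eval (K : nzRingType) (m n : nat) (p : ncpoly K m)
  (a : 'I_m -> 'M[K]_n) : 'M[K]_n :=
  \sum_(t <- p) (t.1 *: \big[mulmx/1%:M]_(i <- t.2) a i).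

Definition upper_tri (K : nzRingType) (n : nat) (A : 'M[K]_n) : Prop :=
  forall i j : 'I_n, (j < i)%N -> A i j = 0.

Definition upper_tri_t (K : nzRingType) (n t : nat) (A : 'M[K]_n) : Prop :=
  upper_tri A /\ forall i j : 'I_n, (j <= i + t)%N -> A i j = 0.

Definition nc_image (K : nzRingType) (m n : nat) (p : ncpoly K m)
  (B : 'M[K]_n) : Prop :=
  exists a : 'I_m -> 'M[K]_n, (forall k, upper_tri (a k)) /\ nc_eval p a = B.

Definition nc_vanishes (K : nzRingType) (m : nat) (p : ncpoly K m) (n : nat) :
  Prop := forall a : 'I_m -> 'M[K]_n, (forall k, upper_tri (a k)) ->
          nc_eval p a = 0.

Definition nc_ord_cond (K : nzRingType) (m : nat) (p : ncpoly K m) (r : nat) :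
  Prop := nc_vanishes p r /\ not (nc_vanishes p r.+1).

Definition nc_ord_is (K : nzRingType) (m : nat) (p : ncpoly K m) (r : nat) :
  Prop := [/\ (0 < r)%N, nc_ord_cond p r &
          forall r' : nat, (0 < r')%N -> (r' < r)%N -> not (nc_ord_cond p r')].

Definition infinite_type (K : eqType) : Prop :=
  forall s : seq K, exists x : K, x \notin s.

(* Main.v *)
Require Import Defs.
From mathcomp Require Import all_boot all_order all_algebra.
From mathcomp Require Import zify.
From Stdlib Require Import Classical.
Set Implicit Arguments. Unset Strict Implicit. Unset Printing Implicit Defensive.
Import GRing.Theory.
Local Open Scope ring_scope.

Definition mprod (R : nzRingType) m n (w : seq 'I_m) (a : 'I_m -> 'M[R]_n) := \big[mulmx/1%:M]_(i <- w) a i.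

Section H.
Variable K : fieldType.

Lemma ut_mul n (x y : 'M[K]_n) : upper_tri x -> upper_tri y -> upper_tri (x *m y).
Proof.
move=> hx hy i j lji; rewrite mxE; apply: big1 => l _.
case: (ltnP l i) => hl; first by rewrite hx // mul0r.
by rewrite hy ?mulr0 //; apply: leq_trans lji hl.
Qed.

Lemma ut_1 n : upper_tri (1%:M : 'M[K]_n).
Proof. move=> i j h; rewrite mxE; case: eqP => // e; move: h; rewrite e ltnn. by []. Qed.

Lemma ut_add n (x y : 'M[K]_n) : upper_tri x -> upper_tri y -> upper_tri (x + y).
Proof. by move=> hx hy i j h; rewrite mxE hx // hy // addr0. Qed.

Lemma ut_scale n c (x : 'M[K]_n) : upper_tri x -> upper_tri (c *: x).
Proof. by move=> hx i j h; rewrite mxE hx // mulr0. Qed.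

Lemma ut_sum n I (s : seq I) (F : I -> 'M[K]_n) :
  (forall i, upper_tri (F i)) -> upper_tri (\sum_(i <- s) F i).
Proof.
move=> hF; elim: s => [|x s IH]; first by rewrite big_nil => i j _; rewrite mxE.
by rewrite big_cons; apply: ut_add.
Qed.


Lemma ut_mprod m n w (a : 'I_m -> 'M[K]_n) : (forall k, upper_tri (a k)) -> upper_tri (mprod w a).
Proof.
move=> ha; elim: w => [|x w IH]; rewrite /mprod ?big_nil ?big_cons; first exact: ut_1.
exact: ut_mul.
Qed.

Lemma nc_evalE m n (p : ncpoly K m) a : nc_eval p a = \sum_(t <- p) t.1 *: @mprod _ m n t.2 a.
Proof. by []. Qed.

Lemma ut_eval m n (p : ncpoly K m) (a : 'I_m -> 'M[K]_n) : (forall k, upper_tri (a k)) -> upper_tri (nc_eval p a).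
Proof. move=> ha; apply: ut_sum => t; apply: ut_scale; exact: ut_mprod. Qed.

Definition rho n k N (x : 'M[K]_n.+1) : 'M[K]_k := \matrix_(i, j) x (inord (N + i)) (inord (N + j)).

Lemma rho_mul n k N (x y : 'M[K]_n.+1) : (N + k <= n.+1)%N -> upper_tri x -> upper_tri y ->
  rho k N (x *m y) = rho k N x *m rho k N y.
Proof.
move=> hk hx hy; apply/matrixP => i j; rewrite !mxE.
have hi : (N + i < n.+1)%N by apply: leq_trans hk; rewrite ltn_add2l.
have hj : (N + j < n.+1)%N by apply: leq_trans hk; rewrite ltn_add2l.
under [RHS]eq_bigr do rewrite !mxE.
pose F l := x (inord (N + i)) (inord l) * y (inord l) (inord (N + j)).
transitivity (\sum_(0 <= l < n.+1) F l).
  by rewrite big_mkord; apply: eq_bigr => l _; rewrite /F inord_val.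
rewrite (@big_cat_nat _ _ _ N 0 n.+1) //=; last by apply: leq_trans hk; rewrite leq_addr.
rewrite (@big_cat_nat _ _ _ (N + k) N n.+1) //= ?leq_addr //.
rewrite big1_seq ?add0r; last first.
  move=> l /andP [_]; rewrite mem_index_iota => /andP [_ hl].
  rewrite /F hx ?mul0r // !inordK //; first by apply: leq_trans (leq_addr _ _).
  by apply: (leq_trans hl); apply: (leq_trans _ hk); rewrite leq_addr.
rewrite [X in _ + X]big1_seq ?addr0; last first.
  move=> l /andP [_]; rewrite mem_index_iota => /andP [hl hl2].
  rewrite /F hy ?mulr0 // !inordK //.
  by apply: leq_trans hl; rewrite ltn_add2l.
rewrite -{1}(add0n N) big_addn addKn big_mkord; apply: eq_bigr => l _.
by rewrite /F [(l + N)%N]addnC.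
Qed.


Lemma rho_1 n k N : (N + k <= n.+1)%N -> rho k N (1%:M : 'M[K]_n.+1) = 1%:M.
Proof.
move=> hk; apply/matrixP => i j; rewrite !mxE.
have hi : (N + i < n.+1)%N by apply: leq_trans hk; rewrite ltn_add2l.
have hj : (N + j < n.+1)%N by apply: leq_trans hk; rewrite ltn_add2l.
have -> : (inord (N + i) == inord (N + j) :> 'I_n.+1) = (i == j); last by [].
apply/eqP/eqP => [h|->//].
apply: val_inj => /=; move: (congr1 val h); rewrite /= !inordK //; exact: addnI.
Qed.

Lemma rho_mprod m n k N w (a : 'I_m -> 'M[K]_n.+1) : (N + k <= n.+1)%N ->
  (forall k, upper_tri (a k)) -> rho k N (mprod w a) = mprod w (fun i => rho k N (a i)).
Proof.
move=> hk ha; elim: w => [|x w IH]; first by rewrite /mprod !big_nil rho_1.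
have e1 : mprod (x :: w) a = a x *m mprod w a by rewrite /mprod big_cons.
have e2 : mprod (x :: w) (fun i => rho k N (a i)) = rho k N (a x) *m mprod w (fun i => rho k N (a i)).
  by rewrite /mprod big_cons.
rewrite e1 e2 rho_mul //; first by rewrite IH.
exact: (ut_mprod w ha).
Qed.

Lemma rho_eval m n k N (p : ncpoly K m) (a : 'I_m -> 'M[K]_n.+1) : (N + k <= n.+1)%N ->
  (forall k, upper_tri (a k)) -> rho k N (nc_eval p a) = nc_eval p (fun i => rho k N (a i)).
Proof.
move=> hk ha; apply/matrixP => i j.
rewrite !nc_evalE mxE !summxE.
apply: eq_bigr => t _.
rewrite [LHS]mxE [RHS]mxE -rho_mprod //.
by rewrite [X in _ = _ * X]mxE.
Qed.

Lemma ut_rho n k N (x : 'M[K]_n.+1) : (N + k <= n.+1)%N -> upper_tri x -> upper_tri (rho k N x).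
Proof.
move=> hk hx i j h; rewrite mxE hx //.
have hi : (N + i < n.+1)%N by apply: leq_trans hk; rewrite ltn_add2l.
have hj : (N + j < n.+1)%N by apply: leq_trans hk; rewrite ltn_add2l.
by rewrite !inordK // ltn_add2l.
Qed.

Definition phi n k N (x : 'M[K]_k.+1) : 'M[K]_n :=
  \matrix_(i, j) if [&& (N <= i)%N, (i <= N + k)%N, (N <= j)%N & (j <= N + k)%N]
                 then x (inord (i - N)) (inord (j - N)) else 0.

Lemma rho_phi n k N (x : 'M[K]_k.+1) : (N + k.+1 <= n.+1)%N -> rho k.+1 N (phi n.+1 N x) = x.
Proof.
move=> hk; apply/matrixP => i j; rewrite !mxE.
have hi : (N + i < n.+1)%N by apply: leq_trans hk; rewrite ltn_add2l.
have hj : (N + j < n.+1)%N by apply: leq_trans hk; rewrite ltn_add2l.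
rewrite !inordK // !leq_addr /= !leq_add2l -[(i <= k)%N]ltnS -[(j <= k)%N]ltnS !ltn_ord /=.
by congr (x _ _); apply: val_inj; rewrite /= inordK addKn ?ltn_ord.
Qed.

Lemma ut_phi n k N (x : 'M[K]_k.+1) : upper_tri x -> upper_tri (phi n N x).
Proof.
move=> hx i j h; rewrite mxE; case: andP => // [[h1 /and3P [h2 h3 h4]]].
rewrite hx // !inordK; last 2 first.
- by rewrite ltnS leq_subLR.
- by rewrite ltnS leq_subLR.
by rewrite ltn_sub2r // (leq_ltn_trans h3 h).
Qed.


Lemma zr_eval m n r (p : ncpoly K m) (a : 'I_m -> 'M[K]_n.+1) :
  nc_vanishes p r -> (0 < r)%N -> (r <= n.+1)%N -> (forall k, upper_tri (a k)) ->
  forall i j : 'I_n.+1, (j < i + r)%N -> nc_eval p a i j = 0.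
Proof.
move=> hv hr hrn ha i j hij.
case: (ltnP j i) => hji; first by apply: ut_eval.
pose N := minn i (n.+1 - r).
have hN : (N + r <= n.+1)%N by move: (ltn_ord i) (ltn_ord j); rewrite /N; lia.
have hi' : (i - N < r)%N by move: (ltn_ord i) (ltn_ord j); rewrite /N; lia.
have hj' : (j - N < r)%N by move: (ltn_ord i) (ltn_ord j); rewrite /N; lia.
have := congr1 (fun M : 'M[K]_r => M (Ordinal hi') (Ordinal hj')) (rho_eval p hN ha).
rewrite hv; last by move=> k; apply: ut_rho.
rewrite mxE /= mxE.
have -> : (inord (N + (i - N)) : 'I_n.+1) = i.
  by apply: val_inj; move: (ltn_ord i) (ltn_ord j); rewrite /= inordK; rewrite /N; lia.
have -> : (inord (N + (j - N)) : 'I_n.+1) = j.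
  by apply: val_inj; move: (ltn_ord i) (ltn_ord j); rewrite /= inordK; rewrite /N; lia.
by [].
Qed.

Lemma corner m r (p : ncpoly K m) (b : 'I_m -> 'M[K]_r.+1) :
  nc_vanishes p r -> (0 < r)%N -> (forall k, upper_tri (b k)) ->
  nc_eval p b != 0 -> nc_eval p b ord0 ord_max != 0.
Proof.
move=> hv hr hb; apply: contraNN => h; apply/eqP/matrixP => i j; rewrite mxE.
case: (ltnP j (i + r)) => hij; first exact: (zr_eval hv hr (leqnSn r) hb hij).
have -> : i = ord0 by apply: val_inj; move: (ltn_ord j) hij => /= ? ?; lia.
have -> : j = ord_max by apply: val_inj; move: (ltn_ord j) hij => /= ? ?; lia.
exact/eqP.
Qed.


Definition liftp m (p : ncpoly K m) : ncpoly {poly K} m := map (fun t => (t.1%:P, t.2)) p.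

Lemma map_mprod (t : K) m n w (X : 'I_m -> 'M[{poly K}]_n) :
  map_mx (horner_eval t) (mprod w X) = mprod w (fun k => map_mx (horner_eval t) (X k)).
Proof.
elim: w => [|x w IH]; first by rewrite /mprod !big_nil map_mx1.
have e1 : mprod (x :: w) X = X x *m mprod w X by rewrite /mprod big_cons.
have e2 : mprod (x :: w) (fun k => map_mx (horner_eval t) (X k)) =
   map_mx (horner_eval t) (X x) *m mprod w (fun k => map_mx (horner_eval t) (X k)).
  by rewrite /mprod big_cons.
by rewrite e1 e2 map_mxM IH.
Qed.

Lemma map_eval (t : K) m n (p : ncpoly K m) (X : 'I_m -> 'M[{poly K}]_n) :
  map_mx (horner_eval t) (nc_eval (liftp p) X) = nc_eval p (fun k => map_mx (horner_eval t) (X k)).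
Proof.
apply/matrixP => i j; rewrite !nc_evalE mxE !summxE big_map rmorph_sum.
apply: eq_bigr => u _ /=.
rewrite [X in horner_eval t X]mxE rmorphM /= [in RHS]mxE -map_mprod [X in _ = _ * X]mxE.
by rewrite /horner_eval hornerC.
Qed.


Lemma nc_eval_ext m n (p : ncpoly K m) (a a' : 'I_m -> 'M[K]_n) :
  (forall k, a k = a' k) -> nc_eval p a = nc_eval p a'.
Proof.
move=> h; rewrite !nc_evalE; apply: eq_bigr => t _; congr (_ *: _).
by rewrite /mprod; apply: eq_bigr => k _.
Qed.

Lemma inf_uniq : infinite_type K -> forall N, exists s : seq K, uniq s /\ size s = N.
Proof.
move=> hK; elim=> [|N [s [us ss]]]; first by exists [::].
have [x hx] := hK s; exists (x :: s); by rewrite /= hx us ss.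
Qed.

Lemma nonroot : infinite_type K -> forall q : {poly K}, q != 0 -> exists t, q.[t] != 0.
Proof.
move=> hK q hq; have [s [us ss]] := inf_uniq hK (size q).
case: (boolP (all (root q) s)) => hall.
  by move: hq; rewrite (roots_geq_poly_eq0 hall us) ?ss ?eqxx.
by have [x _ hx] := allPn hall; exists x.
Qed.


Lemma step1 m n r (p : ncpoly K m) (b : 'I_m -> 'M[K]_r.+1) :
  infinite_type K -> (forall k, upper_tri (b k)) -> nc_eval p b ord0 ord_max != 0 ->
  forall N, (N + r <= n.+1)%N -> exists a : 'I_m -> 'M[K]_n.+1, (forall k, upper_tri (a k)) /\
   forall i j : 'I_n.+1, nat_of_ord j = (i + r)%N -> (i < N)%N -> nc_eval p a i j != 0.
Proof.
move=> hK hb hb0; elim=> [|N IH] hN.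
  exists (fun _ => 0); split; last by move=> i j _; rewrite ltn0.
  by move=> k i j _; rewrite mxE.
have [a [ha hai]] := IH (ltnW hN).
pose e k := phi n.+1 N (b k).
have he : forall k, upper_tri (e k) by move=> k; apply: ut_phi.
pose X k : 'M[{poly K}]_n.+1 := map_mx polyC (a k) + 'X *: map_mx polyC (e k - a k).
pose Q := nc_eval (liftp p) X.
pose at_ (t : K) k := a k + t *: (e k - a k).
have hut t : forall k, upper_tri (at_ t k).
  move=> k i j h; move: (ha k i j h) (he k i j h); rewrite /at_ /e !mxE => -> ->.
  by rewrite subr0 mulr0 addr0.
have hQ t i j : (Q i j).[t] = nc_eval p (at_ t) i j.
  have := congr1 (fun M : 'M[K]_n.+1 => M i j) (map_eval t p X).
  rewrite /= mxE /horner_eval /Q => ->; congr (fun M : 'M[K]_n.+1 => M i j).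
  apply: nc_eval_ext => k; apply/matrixP => i' j'.
  by rewrite !mxE /horner_eval !hornerE.
pose q (i : 'I_n.+1) := Q i (inord (i + r)).
have hq0 (i : 'I_n.+1) : (i < N)%N -> (q i).[0] != 0.
  move=> hi; rewrite /q hQ (@nc_eval_ext _ _ _ _ a); last first.
    by move=> k; rewrite /at_ scale0r addr0.
  apply: hai => //; rewrite inordK //; lia.
have hfit : (N + r.+1 <= n.+1)%N by lia.
have hqN (i : 'I_n.+1) : nat_of_ord i = N -> (q i).[1] != 0.
  move=> hi; rewrite /q hQ (@nc_eval_ext _ _ _ _ e); last first.
    by move=> k; rewrite /at_ scale1r addrC subrK.
  have := congr1 (fun M : 'M[K]_r.+1 => M ord0 ord_max) (rho_eval p hfit he).
  rewrite (@nc_eval_ext _ _ _ (fun i0 => rho r.+1 N (e i0)) b); last first.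
    by move=> k; rewrite /e rho_phi.
  rewrite /= mxE => h.
  have e1 : (inord (N + 0) : 'I_n.+1) = i by apply: val_inj; rewrite /= inordK; lia.
  have e2 : (inord (N + @ord_max r) : 'I_n.+1) = inord (i + r) by rewrite hi.
  by rewrite e1 e2 in h; rewrite h.
pose Pq := \prod_(i : 'I_n.+1 | (i < N.+1)%N) q i.
have hPq : Pq != 0.
  apply/prodf_neq0 => i hi; apply/eqP => hqi.
  case: (ltnP i N) => hiN.
    by move: (hq0 i hiN); rewrite hqi horner0 eqxx.
  by move: (hqN i (esym (anti_leq (andb_true_intro (conj hiN hi))))); rewrite hqi horner0 eqxx.
have [t ht] := nonroot hK hPq.
exists (at_ t); split => // i j hj hi.
move: ht; rewrite horner_prod => /prodf_neq0 /(_ i hi).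
rewrite /q hQ.
have -> : (inord (i + r) : 'I_n.+1) = j by apply: val_inj; rewrite /= inordK; lia.
by [].
Qed.


Definition mpow n (A : 'M[K]_n) q := iter q (mulmx A) 1%:M.

Lemma mpow_zero n r (A : 'M[K]_n) : (forall i j : 'I_n, (j < i + r)%N -> A i j = 0) ->
  forall q (i j : 'I_n), (j < i + q * r)%N -> mpow A q i j = 0.
Proof.
move=> hA; elim=> [|q IH] i j h.
  by rewrite /= mxE; case: eqP => // e; move: h; rewrite e mul0n addn0 ltnn.
rewrite /= mxE; apply: big1 => l _.
case: (ltnP l (i + r)) => hl; first by rewrite hA // mul0r.
rewrite IH ?mulr0 //; apply: (leq_trans h); rewrite mulSn addnA leq_add2r //.
Qed.

Lemma mpow_nz n r (A : 'M[K]_n) : (forall i j : 'I_n, (j < i + r)%N -> A i j = 0) ->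
  (forall i j : 'I_n, nat_of_ord j = (i + r)%N -> A i j != 0) ->
  forall q (i j : 'I_n), nat_of_ord j = (i + q * r)%N -> mpow A q i j != 0.
Proof.
move=> hA hA2; elim=> [|q IH] i j h.
  have -> : i = j by apply: val_inj; rewrite /= h mul0n addn0.
  by rewrite /= mxE eqxx oner_eq0.
have hl0 : (i + r < n)%N by move: (ltn_ord j); rewrite h mulSn; lia.
pose l0 := Ordinal hl0.
rewrite /= mxE (bigD1 l0) //= big1 ?addr0.
  apply: mulf_neq0; first exact: hA2.
  by apply: IH => /=; rewrite h mulSn addnA.
move=> l hl.
case: (ltnP l (i + r)) => hl1; first by rewrite hA // mul0r.
rewrite (mpow_zero hA) ?mulr0 //.
have : nat_of_ord l != (i + r)%N by apply: contra hl => /eqP e; apply/eqP/val_inj.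
move: hl1; rewrite h mulSn; lia.
Qed.

Lemma inv_ut n (g : 'M[K]_n) : upper_tri g -> (forall i, g i i != 0) -> g \in unitmx ->
  upper_tri (invmx g).
Proof.
move=> hg hd hu.
suff H : forall k (i j : 'I_n), (j < i)%N -> (n <= i + k)%N -> invmx g i j = 0.
  by move=> i j h; apply: (H n) => //; rewrite leq_addl.
elim=> [|k IH] i j hji hk; first by move: (ltn_ord i) hk; lia.
have := congr1 (fun M : 'M[K]_n => M i j) (mulmxV hu).
rewrite /= !mxE (bigD1 i) //= big1 ?addr0.
  have -> : (i == j) = false by apply/eqP => e; move: hji; rewrite e ltnn.
  by move/eqP; rewrite mulf_eq0 (negbTE (hd i)) /= => /eqP.
move=> l hl.
case: (ltnP l i) => hli; first by rewrite hg // mul0r.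
have hne : nat_of_ord l != nat_of_ord i by [].
rewrite IH ?mulr0 //; move: hk hli hji hne; lia.
Qed.

Lemma ut_unit n (g : 'M[K]_n) : upper_tri g -> (forall i, g i i != 0) -> g \in unitmx.
Proof.
move=> hg hd; rewrite unitmxE -det_tr det_trig.
  by rewrite unitfE; apply/prodf_neq0 => i _; rewrite mxE.
by apply/is_trig_mxP => i j h; rewrite mxE hg.
Qed.


Definition Jr n r : 'M[K]_n.+1 := \matrix_(i, j) ((nat_of_ord j == i + r)%N)%:R.
Definition qf n r (j : nat) := ((n - j) %/ r)%N.
Definition gmx n r (A : 'M[K]_n.+1) : 'M[K]_n.+1 :=
  \matrix_(i, j) mpow A (qf n r j) i (inord (j + qf n r j * r)).

Lemma qf_le n r (j : 'I_n.+1) : (j + qf n r j * r <= n)%N.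
Proof.
have := leq_divM (n - j) r; rewrite /qf; move: (ltn_ord j); lia.
Qed.

Lemma gmx_ut n r (A : 'M[K]_n.+1) : (forall i j : 'I_n.+1, (j < i + r)%N -> A i j = 0) ->
  upper_tri (gmx r A).
Proof.
move=> hA i j h; rewrite mxE (mpow_zero hA) // inordK ?ltnS ?qf_le //.
by rewrite ltn_add2r.
Qed.

Lemma gmx_diag n r (A : 'M[K]_n.+1) : (forall i j : 'I_n.+1, (j < i + r)%N -> A i j = 0) ->
  (forall i j : 'I_n.+1, nat_of_ord j = (i + r)%N -> A i j != 0) ->
  forall i, gmx r A i i != 0.
Proof.
move=> hA hA2 i; rewrite mxE (mpow_nz hA hA2) // inordK // ltnS qf_le //.
Qed.

Lemma gmx_J n r (A : 'M[K]_n.+1) : (0 < r)%N -> (forall i j : 'I_n.+1, (j < i + r)%N -> A i j = 0) ->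
  A *m gmx r A = gmx r A *m Jr n r.
Proof.
move=> hr hA; apply/matrixP => i j.
pose c : 'I_n.+1 := inord (j + qf n r j * r).
have hc : nat_of_ord c = (j + qf n r j * r)%N by rewrite inordK // ltnS qf_le.
transitivity (mpow A (qf n r j).+1 i c).
  by rewrite /= !mxE; apply: eq_bigr => l _; rewrite mxE.
rewrite [RHS]mxE.
case: (ltnP j r) => hjr.
  rewrite big1; first by rewrite (mpow_zero hA) // hc mulSn; lia.
  move=> l _; rewrite [Jr _ _ _ _]mxE; case: (nat_of_ord j =P (l + r)%N) => [e|ne]; last by rewrite mulr0.
  by move: hjr; rewrite e; lia.
have hl0 : (j - r < n.+1)%N by move: (ltn_ord j); lia.
pose l0 := Ordinal hl0.
rewrite (bigD1 l0) //= big1 ?addr0; last first.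
  move=> l hl; rewrite [Jr _ _ _ _]mxE; case: (nat_of_ord j =P (l + r)%N) => [e|ne]; last by rewrite mulr0.
  have el : l = l0 by apply: val_inj; rewrite /= e addnK.
  by move: hl; rewrite el eqxx.
rewrite !mxE /= subnK // eqxx mulr1.
have hq : qf n r (j - r) = (qf n r j).+1.
  rewrite /qf; have -> : (n - (j - r) = (n - j) + r)%N by move: (ltn_ord j); lia.
  by rewrite divnDr ?dvdnn // divnn hr addn1.
rewrite hq.
have hv : (j - r + (qf n r j).+1 * r = j + qf n r j * r)%N by rewrite mulSn; lia.
by rewrite hv /= [RHS]mxE.
Qed.


Lemma conj_mprod m n w (a : 'I_m -> 'M[K]_n) (k ki : 'M[K]_n) :
  ki *m k = 1%:M -> k *m ki = 1%:M -> mprod w (fun i => k *m a i *m ki) = k *m mprod w a *m ki.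
Proof.
move=> h1 h2; elim: w => [|x w IH]; first by rewrite /mprod !big_nil mulmx1 h2.
have e1 : mprod (x :: w) a = a x *m mprod w a by rewrite /mprod big_cons.
have e2 : mprod (x :: w) (fun i => k *m a i *m ki) =
   (k *m a x *m ki) *m mprod w (fun i => k *m a i *m ki) by rewrite /mprod big_cons.
rewrite e1 e2 IH -!mulmxA (mulmxA ki k) h1 mul1mx.
by [].
Qed.

Lemma conj_eval m n (p : ncpoly K m) (a : 'I_m -> 'M[K]_n) (k ki : 'M[K]_n) :
  ki *m k = 1%:M -> k *m ki = 1%:M ->
  nc_eval p (fun i => k *m a i *m ki) = k *m nc_eval p a *m ki.
Proof.
move=> h1 h2; rewrite !nc_evalE mulmx_sumr mulmx_suml; apply: eq_bigr => t _.
by rewrite conj_mprod // scalemxAl scalemxAr.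
Qed.

End H.

Unset Implicit Arguments.
Set Strict Implicit.

Theorem lemma3p2 (K : fieldType) (m n r : nat) (p : ncpoly K m)
  (A' : 'M[K]_n) :
  infinite_type K -> (1 <= m)%N -> (2 <= n)%N ->
  nc_const p = 0 -> nc_ord_is p r -> (1 < r)%N -> (r < n - 1)%N ->
  upper_tri_t (r - 1) A' ->
  (forall i j : 'I_n, nat_of_ord j = (i + r)%N -> A' i j != 0) ->
  nc_image p A'.
Proof.
move=> hK hm hn hc [hr0 [hvr hnv] _] hr1.
case: n A' hn => [|n] A' hn // hrn [hut hzA] hnzA.
have [b [hb hpb]] : exists b : 'I_m -> 'M[K]_r.+1, (forall k, upper_tri (b k)) /\ nc_eval p b != 0.
  apply: NNPP => H; apply: hnv => b hb.
  case: (eqVneq (nc_eval p b) 0) => // hne; exfalso; apply: H; exists b; by split.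
have hb0 := corner hvr hr0 hb hpb.
have hN : ((n.+1 - r) + r <= n.+1)%N by lia.
have [a [ha hai]] := step1 hK hb hb0 hN.
pose B := nc_eval p a.
have hzB : forall i j : 'I_n.+1, (j < i + r)%N -> B i j = 0.
  by move=> i j h; apply: (zr_eval hvr hr0) => //; lia.
have hnzB : forall i j : 'I_n.+1, nat_of_ord j = (i + r)%N -> B i j != 0.
  by move=> i j h; apply: hai => //; move: (ltn_ord j); lia.
have hzA' : forall i j : 'I_n.+1, (j < i + r)%N -> A' i j = 0.
  by move=> i j h; apply: hzA; lia.
pose gA := gmx r A'; pose gB := gmx r B.
have gAu : upper_tri gA by apply: gmx_ut.
have gBu : upper_tri gB by apply: gmx_ut.
have gAd : forall i, gA i i != 0 by apply: gmx_diag.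
have gBd : forall i, gB i i != 0 by apply: gmx_diag.
have gAi := ut_unit gAu gAd; have gBi := ut_unit gBu gBd.
have iA := inv_ut gAu gAd gAi; have iB := inv_ut gBu gBd gBi.
pose k := gA *m invmx gB; pose ki := gB *m invmx gA.
have h1 : ki *m k = 1%:M.
  by rewrite /k /ki mulmxA -(mulmxA gB) mulVmx // mulmx1 mulmxV.
have h2 : k *m ki = 1%:M.
  by rewrite /k /ki mulmxA -(mulmxA gA) mulVmx // mulmx1 mulmxV.
pose J := Jr K n r.
have JA := gmx_J hr0 hzA'; have JB := gmx_J hr0 hzB.
have eA : A' = k *m B *m ki.
  have e4 : B = gB *m J *m invmx gB.
    by rewrite -JB -mulmxA mulmxV // mulmx1.
  have s1 : invmx gB *m B = J *m invmx gB by rewrite e4 !mulmxA mulVmx // mul1mx.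
  have s2 : A' = gA *m J *m invmx gA by rewrite -JA -mulmxA mulmxV // mulmx1.
  rewrite /k /ki !mulmxA -(mulmxA gA (invmx gB) B) s1 mulmxA.
  by rewrite -(mulmxA (gA *m J) (invmx gB) gB) mulVmx // mulmx1.
exists (fun i => k *m a i *m ki); split.
  move=> i; apply: ut_mul; last by apply: ut_mul.
  by apply: ut_mul => //; apply: ut_mul.
by rewrite conj_eval // eA.
Qed.
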